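(* For integers $p,q\ge 3$ with $p\mid q$, let $u_{q,p}:\mathbf{mGT}_q\to\mathbf{mGT}_p$ be the homomorphism sending $g\in\mathbf{mGT}_q$ to the unique permutation $u_{q,p}(g)$ of $\mathbb{Z}/p\mathbb{Z}$ satisfying $t_{q,p}\circ g=u_{q,p}(g)\circ t_{q,p}$, where $t_{q,p}:\mathbb{Z}/q\mathbb{Z}\to\mathbb{Z}/p\mathbb{Z}$ is reduction mod $p$. Then the groups $\mathbf{mGT}_q$ ($q\ge3$) together with the homomorphisms $u_{q,p}$ (for $p\mid q$) form a projective system indexed by the integers $\ge 3$ ordered by divisibility, and hence there exists a well-defined group $\mathbf{mGT}=\varprojlim_q \mathbf{mGT}_q$, the projective limit of the groups $\mathbf{mGT}_q$ with respect to the homomorphisms $u_{q,p}$.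
   Context: For an integer $q\ge 3$, $\mathbf{mGT}_q$ is the subgroup of the group of permutations of $\mathbb{Z}/q\mathbb{Z}$ generated by the multiplications $a\mapsto da$ for $d\in(\mathbb{Z}/q\mathbb{Z})^*$ (residues coprime to $q$) and the involution $\theta_q:a\mapsto 1-a$. The group $\mathbf{mGT}$ is called by the paper the modified profinite Grothendieck–Teichmüller group. *)

(* Defs.v *)
From HB Require Import structures.
From mathcomp Require Import all_boot all_order all_algebra all_fingroup.
Set Implicit Arguments. Unset Strict Implicit. Unset Printing Implicit Defensive.
Import GRing.Theory.

Local Open Scope group_scope.

(* Generators of mGT_q as permutations of Z/qZ:
   a |-> d * a for d a unit of Z/qZ, and theta_q : a |-> 1 - a.
   ('Z_q is Z/qZ for q >= 2; we only use q >= 3.) *)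
Definition mGT_gens (q : nat) : {set {perm 'Z_q}} :=
  [set s : {perm 'Z_q} |
     [exists d : {unit 'Z_q}, [forall a : 'Z_q, s a == (val d * a)%R]]
     || [forall a : 'Z_q, s a == (1 - a)%R]].

Definition mGT (q : nat) : {group {perm 'Z_q}} := <<mGT_gens q>>%G.

Definition red (q p : nat) (a : 'Z_q) : 'Z_p := inZp (val a).

(* Main.v *)
Require Import Defs.
From HB Require Import structures.
From mathcomp Require Import all_boot all_order all_algebra all_fingroup.
Set Implicit Arguments. Unset Strict Implicit. Unset Printing Implicit Defensive.

Section Aux.
Import GRing.Theory.
Local Open Scope ring_scope.

Lemma red_natr q p (z : 'Z_q) : red p z = (nat_of_ord z)%:R.
Proof. by rewrite Zp_nat. Qed.

Lemma red_nat q p n : (1 < p)%N -> (1 < q)%N -> (p %| q)%N -> red p (n%:R : 'Z_q) = n%:R.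
Proof.
move=> p1 q1 pq; rewrite red_natr val_Zp_nat //.
by rewrite -(Zp_nat_mod p1 (n %% q)) (modn_dvdm _ pq) Zp_nat_mod.
Qed.

Lemma redD q p (x y : 'Z_q) : (1 < p)%N -> (1 < q)%N -> (p %| q)%N -> red p (x + y) = red p x + red p y.
Proof.
move=> p1 q1 pq; rewrite -[x]natr_Zp -[y]natr_Zp -natrD !red_nat //.
by rewrite natrD.
Qed.

Lemma redM q p (x y : 'Z_q) : (1 < p)%N -> (1 < q)%N -> (p %| q)%N -> red p (x * y) = red p x * red p y.
Proof.
move=> p1 q1 pq; rewrite -[x]natr_Zp -[y]natr_Zp -natrM !red_nat //.
by rewrite natrM.
Qed.

Lemma red1 q p : (1 < p)%N -> (1 < q)%N -> (p %| q)%N -> red p (1 : 'Z_q) = 1.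
Proof. by move=> p1 q1 pq; have := red_nat 1 p1 q1 pq. Qed.

Lemma redN q p (x : 'Z_q) : (1 < p)%N -> (1 < q)%N -> (p %| q)%N -> red p (- x) = - red p x.
Proof.
move=> p1 q1 pq; apply/eqP; rewrite -subr_eq0 opprK -redD // addNr.
by rewrite -[0]/(0%:R) red_nat.
Qed.

Lemma red_lift q p (b : 'Z_p) : (1 < p)%N -> (p <= q)%N -> red p (inZp (val b) : 'Z_q) = b.
Proof.
move=> p1 pq; apply: val_inj => /=.
have q1 : (1 < q)%N by apply: leq_trans pq.
case: b => n /=; rewrite !Zp_cast // => hn.
by rewrite !modn_small //; apply: leq_trans pq.
Qed.

Lemma redK q (a : 'Z_q) : (1 < q)%N -> red q a = a.
Proof. by move=> q1; rewrite /red valZpK. Qed.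

Lemma red_red r q p (a : 'Z_r) : (1 < p)%N -> (1 < q)%N -> (1 < r)%N -> (p %| q)%N -> (q %| r)%N ->
  red p (red q a) = red p a.
Proof.
move=> p1 q1 r1 pq qr; rewrite [red q a]red_natr red_nat // red_natr //.
Qed.
End Aux.

Definition CS q p : {set {perm 'Z_q}} :=
  [set g : {perm 'Z_q} | [forall a, forall b,
     (red p a == red p b) ==> (red p (g a) == red p (g b))]].

Definition fu q p (g : {perm 'Z_q}) (b : 'Z_p) : 'Z_p := red p (g (inZp (val b))).

Definition fu' q p (g : {perm 'Z_q}) (b : 'Z_p) : 'Z_p :=
  if injectiveb (@fu _ p g) then @fu _ p g b else b.

Lemma fu'_inj q p (g : {perm 'Z_q}) : injective (@fu' _ p g).
Proof. rewrite /fu'; case: injectiveP => // H; exact: inj_id. Qed.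

Definition u q p (g : {perm 'Z_q}) : {perm 'Z_p} := perm (@fu'_inj q p g).

Section G.
Local Open Scope group_scope.
Variables (q p : nat).
Hypotheses (p1 : (1 < p)%N) (q1 : (1 < q)%N) (pq : (p %| q)%N).

Lemma pleq : (p <= q)%N.
Proof. by apply: dvdn_leq => //; apply: ltnW. Qed.

Lemma CSP (g : {perm 'Z_q}) a b : g \in CS q p -> red p a = red p b -> red p (g a) = red p (g b).
Proof.
rewrite inE => /forallP /(_ a) /forallP /(_ b) /implyP H E.
by apply/eqP; apply: H; rewrite E.
Qed.

Lemma CS_gs : group_set (CS q p).
Proof.
apply/group_setP; split.
  rewrite inE; apply/forallP => a; apply/forallP => b; rewrite !perm1; exact/implyP.
move=> x y Hx Hy; rewrite inE; apply/forallP => a; apply/forallP => b.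
apply/implyP => /eqP E; rewrite !permM; apply/eqP.
by apply: (CSP Hy); apply: (CSP Hx).
Qed.

Definition CSG := Group CS_gs.

Lemma mGT_CS : mGT q \subset CS q p.
Proof.
rewrite /mGT /= (gen_subG _ CSG); apply/subsetP => g.
rewrite inE => /orP [/existsP [d /forallP Hd] | /forallP Hd];
  rewrite inE; apply/forallP => a; apply/forallP => b; apply/implyP => /eqP E;
  rewrite (eqP (Hd a)) (eqP (Hd b)).
  by rewrite !redM // E.
by rewrite !(redD, redN, red1) // E.
Qed.

Lemma red_lift' (g : {perm 'Z_q}) a : g \in CS q p ->
  red p (g (inZp (val (red p a)))) = red p (g a).
Proof. by move=> Hg; apply: CSP => //; rewrite red_lift // pleq. Qed.

Lemma fu_inj g : g \in CS q p -> injective (@fu _ p g).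
Proof.
move=> Hg; have Hg' : g^-1 \in CS q p by rewrite -[CS q p]/(gval CSG) groupV.
apply: (can_inj (g := @fu _ p g^-1)) => b.
rewrite /fu.
by rewrite -{2}(red_lift (q := q) b p1 pleq) red_lift' // permK.
Qed.

Lemma uE g : g \in CS q p -> u p g =1 @fu _ p g.
Proof.
move=> Hg x; rewrite /u permE /fu'.
by case: injectiveP => // H; exfalso; apply: H; apply: fu_inj.
Qed.

Lemma u_spec g a : g \in CS q p -> red p (g a) = u p g (red p a).
Proof. by move=> Hg; rewrite uE // /fu red_lift'. Qed.

Lemma u_uniq g (h : {perm 'Z_p}) : g \in CS q p ->
  (forall a, red p (g a) = h (red p a)) -> h = u p g.
Proof.
move=> Hg H; apply/permP => b.
by rewrite -(red_lift (q := q) b p1 pleq) -H u_spec.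
Qed.

Lemma u1 : u p (1 : {perm 'Z_q}) = 1.
Proof.
symmetry; apply: u_uniq; first exact: (group1 CSG).
by move=> a; rewrite !perm1.
Qed.

Lemma uM x y : x \in CS q p -> y \in CS q p -> u p (x * y) = u p x * u p y.
Proof.
move=> Hx Hy; symmetry; apply: u_uniq; first by rewrite -[CS q p]/(gval CSG) groupM.
by move=> a; rewrite !permM -!u_spec.
Qed.

Lemma u_gens g : g \in mGT_gens q -> u p g \in mGT_gens p.
Proof.
have HCS : g \in mGT_gens q -> g \in CS q p.
  by move=> Hg; apply: (subsetP mGT_CS); apply: mem_gen.
move=> Hg; have Hc := HCS Hg; move: Hg.
rewrite !inE => /orP [/existsP [d /forallP Hd] | /forallP Hd]; apply/orP; [left|right].
  have Hu : (red p (val d) \is a GRing.unit)%R.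
    rewrite red_natr unitZpE //.
    have := valP d; rewrite -[X in (X \is a _)%R]natr_Zp unitZpE //.
    by apply: coprime_dvdl.
  apply/existsP; exists (FinRing.Unit Hu); apply/forallP => b /=.
  by rewrite -(red_lift (q := q) b p1 pleq) -u_spec // (eqP (Hd _)) redM.
apply/forallP => b.
by rewrite -(red_lift (q := q) b p1 pleq) -u_spec // (eqP (Hd _)) !(redD, redN, red1).
Qed.

Definition SS : {set {perm 'Z_q}} := [set g in CS q p | u p g \in mGT p].

Lemma SS_gs : group_set SS.
Proof.
apply/group_setP; split.
  by rewrite [_ \in SS]inE (group1 CSG) u1 group1.
move=> x y; rewrite ![_ \in SS]inE => /andP [Hx Hux] /andP [Hy Huy].
rewrite uM //; apply/andP; split; last by rewrite groupM.
by rewrite -[CS q p]/(gval CSG) groupM.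
Qed.

Lemma u_mGT g : g \in mGT q -> u p g \in mGT p.
Proof.
move=> Hg.
have : mGT q \subset Group SS_gs.
  rewrite /mGT /= (gen_subG _ (Group SS_gs)); apply/subsetP => x Hx.
  rewrite [_ \in SS]inE (subsetP mGT_CS) /=; last exact: mem_gen.
  idtac.
  by apply: mem_gen; apply: u_gens.
by move/subsetP/(_ g Hg); rewrite [_ \in SS]inE => /andP [].
Qed.

End G.
Theorem corollary6p4 :
  exists u : forall q p : nat, {perm 'Z_q} -> {perm 'Z_p},
    (* u_{q,p} is well defined: u_{q,p}(g) is the unique permutation with
       t_{q,p} o g = u_{q,p}(g) o t_{q,p}, and it lies in mGT_p *)
    (forall q p : nat, 3 <= p -> 3 <= q -> p %| q ->
       forall g, g \in mGT q ->
         [/\ u q p g \in mGT p,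
             (forall a : 'Z_q, red p (g a) = u q p g (red p a)) &
             (forall h : {perm 'Z_p},
                (forall a : 'Z_q, red p (g a) = h (red p a)) -> h = u q p g)])
    (* u_{q,p} is a group homomorphism mGT_q -> mGT_p *)
    /\ (forall q p : nat, 3 <= p -> 3 <= q -> p %| q ->
         {in mGT q &, {morph u q p : x y / (x * y)%g}})
    (* projective system: u_{q,q} = id and u_{q,p} o u_{r,q} = u_{r,p} *)
    /\ (forall q : nat, 3 <= q -> {in mGT q, forall g, u q q g = g})
    /\ (forall r q p : nat, 3 <= p -> 3 <= q -> 3 <= r -> p %| q -> q %| r ->
         {in mGT r, forall g, u q p (u r q g) = u r p g})
    (* the projective limit (compatible families) is a group under
       componentwise operations *)
    /\ (let lim := fun x : forall q : nat, {perm 'Z_q} =>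
            (forall q, 3 <= q -> x q \in mGT q) /\
            (forall q p, 3 <= p -> 3 <= q -> p %| q -> u q p (x q) = x p) in
        [/\ lim (fun q => 1%g),
            (forall x y, lim x -> lim y -> lim (fun q => (x q * y q)%g)) &
            (forall x, lim x -> lim (fun q => (x q)^-1%g))]).
Proof.
have H3 : forall n, (3 <= n)%N -> (1 < n)%N by move=> n /ltnW.
have Hcs : forall q p (g : {perm 'Z_q}), (3 <= p)%N -> (3 <= q)%N -> (p %| q)%N ->
  g \in mGT q -> g \in CS q p.
  by move=> q p g hp hq pq Hg; apply: (subsetP (mGT_CS (H3 _ hp) (H3 _ hq) pq)).
have Hmor : forall q p : nat, (3 <= p)%N -> (3 <= q)%N -> (p %| q)%N ->
         {in mGT q &, {morph (@u q p) : x y / (x * y)%g}}.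
  by move=> q p hp hq pq x y Hx Hy; rewrite uM ?H3 // ?Hcs.
have Hin : forall q p : nat, (3 <= p)%N -> (3 <= q)%N -> (p %| q)%N ->
   forall g, g \in mGT q -> u p g \in mGT p.
  by move=> q p hp hq pq g Hg; apply: u_mGT; rewrite ?H3.
exists (fun q p => @u q p); split; [|split; [exact: Hmor|split; [|split]]].
- move=> q p hp hq pq g Hg; split; first exact: Hin.
    by move=> a; apply: u_spec; rewrite ?H3 ?Hcs.
  by move=> h Hh; apply: u_uniq; rewrite ?H3 ?Hcs.
- move=> q hq g Hg; symmetry; apply: u_uniq; rewrite ?H3 ?Hcs //.
  by move=> a; rewrite !redK ?H3.
- move=> r q p hp hq hr pq qr g Hg.
  have pr : (p %| r)%N by apply: dvdn_trans qr.
  apply: (u_uniq (H3 _ hp) (H3 _ hr) pr); first exact: Hcs.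
  move=> a; rewrite -(red_red (r := r) _ (H3 _ hp) (H3 _ hq) (H3 _ hr) pq qr).
  rewrite (u_spec (H3 _ hq) (H3 _ hr) qr); last exact: Hcs.
  rewrite (u_spec (H3 _ hp) (H3 _ hq) pq); last by apply: Hcs => //; exact: Hin.
  by rewrite red_red ?H3.
- move=> lim; split.
  + split; first by move=> q _; exact: group1.
    move=> q p hp hq pq; exact: (u1 (H3 _ hp) (H3 _ hq) pq).
  + move=> x y [Hx1 Hx2] [Hy1 Hy2]; split; first by move=> q hq; rewrite groupM ?Hx1 ?Hy1.
    by move=> q p hp hq pq; rewrite Hmor ?Hx1 ?Hy1 // Hx2 ?Hy2.
  + move=> x [Hx1 Hx2]; split; first by move=> q hq; rewrite groupV Hx1.
    move=> q p hp hq pq; rewrite -(Hx2 q p) //.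
    apply: (mulIg (u p (x q))); rewrite mulVg -Hmor ?groupV ?Hx1 //.
    by rewrite mulVg (u1 (H3 _ hp) (H3 _ hq) pq).
Qed.
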